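(* If $G$ is a $K_3$-free graph, then $KB(G)=(KB_m(G))^2$ (as graphs on the common vertex set consisting of the bicliques of $G$).
   Context: All graphs are finite and simple. A biclique of a graph $G$ is a set $P\subseteq V(G)$ such that the induced subgraph $G[P]$ is a complete bipartite graph with both parts nonempty, and $P$ is inclusion-maximal with this property. Since $G[P]$ is connected, its bipartition into two nonempty independent sets $X,Y$ (every vertex of $X$ adjacent to every vertex of $Y$) is unique; we write $P=XY$ to mean $P=X\cup Y$ with $X,Y$ these two parts, called the sides of $P$. Two bicliques $P,Q$ of $G$ are mutually included if their sides can be named $P=X_PY_P$, $Q=X_QY_Q$ so that $X_Q\subsetneq X_P$ and $Y_P\subsetneq Y_Q$. The biclique graph $KB(G)$ has the set of bicliques of $G$ as vertex set, two distinct bicliques being adjacent iff they intersect. The mutually included biclique graph $KB_m(G)$ has the same vertex set, two distinct bicliques being adjacent iff they are mutually included. For a graph $H$, the square $H^2$ has vertex set $V(H)$, two distinct vertices being adjacent iff their distance in $H$ is at most $2$. *)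

(* Defs.v *)
From mathcomp Require Import all_boot.
Set Implicit Arguments. Unset Strict Implicit. Unset Printing Implicit Defensive.

Section Bicliques.
Variables (T : finType) (e : rel T).

Definition simple_graph : Prop := symmetric e /\ irreflexive e.

Definition K3_free : Prop :=
  forall x y z : T, ~ [/\ e x y, e y z & e x z].

Definition independent (A : {set T}) : Prop :=
  forall x y, x \in A -> y \in A -> ~~ e x y.

Definition sides (X Y : {set T}) : Prop :=
  [/\ X != set0, Y != set0, independent X, independent Y &
      forall x y, x \in X -> y \in Y -> e x y].

Definition cbip (P : {set T}) : Prop :=
  exists X Y, P = X :|: Y /\ sides X Y.

Definition biclique (P : {set T}) : Prop :=
  cbip P /\ forall P' : {set T}, P \proper P' -> ~ cbip P'.

Definition mutually_included (P Q : {set T}) : Prop :=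
  exists XP YP XQ YQ : {set T},
    [/\ P = XP :|: YP, sides XP YP, Q = XQ :|: YQ, sides XQ YQ &
        XQ \proper XP /\ YP \proper YQ].

Definition KB_adj (P Q : {set T}) : Prop :=
  P != Q /\ P :&: Q != set0.

Definition KBm_adj (P Q : {set T}) : Prop :=
  P != Q /\ mutually_included P Q.

Definition KBm_sq_adj (P Q : {set T}) : Prop :=
  P != Q /\
  (KBm_adj P Q \/ exists R : {set T}, [/\ biclique R, KBm_adj P R & KBm_adj R Q]).

End Bicliques.

(* Main.v *)
Require Import Defs.
From mathcomp Require Import all_boot.
Set Implicit Arguments. Unset Strict Implicit. Unset Printing Implicit Defensive.

Section S.
Variables (T : finType) (e : rel T).
Hypothesis sym : symmetric e.
Hypothesis irr : irreflexive e.
Hypothesis k3 : K3_free e.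

Definition nb (A : {set T}) : {set T} := [set z | [forall a in A, e a z]].

Lemma nbP (A : {set T}) z : reflect (forall a, a \in A -> e a z) (z \in nb A).
Proof. rewrite inE; exact: forall_inP. Qed.

Lemma nb_anti (A B : {set T}) : A \subset B -> nb B \subset nb A.
Proof. move=> /subsetP AB; apply/subsetP => z /nbP H; apply/nbP => a /AB; exact: H. Qed.

Lemma nb_ext (A : {set T}) : A \subset nb (nb A).
Proof. apply/subsetP => a aA; apply/nbP => z /nbP H; rewrite sym; exact: H. Qed.

Lemma nb3 (A : {set T}) : nb (nb (nb A)) = nb A.
Proof. by apply/eqP; rewrite eqEsubset (nb_anti (nb_ext A)) nb_ext. Qed.

Lemma sidesC (X Y : {set T}) : sides e X Y -> sides e Y X.
Proof. case=> X0 Y0 iX iY c; split=> // x y xY yX; rewrite sym; exact: c. Qed.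

Lemma biclique_nb (P X Y : {set T}) : biclique e P -> P = X :|: Y -> sides e X Y -> Y = nb X.
Proof.
case=> _ maxP eP [X0 Y0 iX iY c]; subst P.
apply/setP => z; apply/idP/idP.
- move=> zY; apply/nbP => a aX; exact: c.
- move=> /nbP zN; case: (boolP (z \in Y)) => // zY; exfalso.
  case/set0Pn: (X0) => x0 x0X.
  have ex0z := zN x0 x0X.
  have zX : z \notin X.
    apply/negP => zX. by move: (iX _ _ x0X zX); rewrite ex0z.
  apply: (maxP (X :|: (z |: Y))).
  + rewrite properE; apply/andP; split.
    * by rewrite setUS // subsetUr.
    * apply/negP => /subsetP /(_ z); rewrite !inE eqxx orbT => /(_ isT).
      by rewrite (negbTE zX) (negbTE zY).
  + exists X, (z |: Y); split => //; split => //.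
    * apply/set0Pn; exists z; by rewrite !inE eqxx.
    * move=> a b; rewrite !inE => /orP[/eqP->|aY] /orP[/eqP->|bY].
      -- by rewrite irr.
      -- apply/negP => ezb. apply: (@k3 x0 z b); split => //. exact: c.
      -- apply/negP => eaz. apply: (@k3 x0 z a); split => //; [by rewrite sym | exact: c].
      -- exact: iY.
    * move=> a b aX; rewrite !inE => /orP[/eqP->|bY]; [exact: zN | exact: c].
Qed.

Lemma biclique_pick (P : {set T}) v : biclique e P -> v \in P ->
  exists X Y, [/\ P = X :|: Y, sides e X Y, v \in X, Y = nb X & X = nb Y].
Proof.
move=> bP vP; have [X [Y [eP sXY]]] := bP.1.
have hY := biclique_nb bP eP sXY.
have hX : X = nb Y by apply: biclique_nb bP _ (sidesC sXY); rewrite setUC.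
move: vP; rewrite eP inE => /orP[vX|vY].
- by exists X, Y.
- exists Y, X; split => //; [by rewrite setUC | exact: sidesC].
Qed.

Lemma cover_aux (X Y X' Y' : {set T}) x0 : sides e X Y -> Y = nb X -> X = nb Y -> sides e X' Y' ->
  x0 \in X -> x0 \in X' -> X :|: Y \subset X' :|: Y' -> X' :|: Y' \subset X :|: Y.
Proof.
move=> [X0 Y0 iX iY c] eY eX [_ _ iX' iY' c'] x0X x0X' /subsetP sub.
have YY' : Y \subset Y'.
  apply/subsetP=> y yY. have := sub y; rewrite !inE yY orbT => /(_ isT) /orP[yX'|//].
  by move: (iX' _ _ x0X' yX'); rewrite (c _ _ x0X yY).
have XX' : X \subset X'.
  apply/subsetP => x xX. case/set0Pn: Y0 => y0 y0Y.
  have := sub x; rewrite !inE xX => /(_ isT) /orP[//|xY'].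
  by move: (iY' _ _ xY' (subsetP YY' _ y0Y)); rewrite (c _ _ xX y0Y).
apply/subsetP => z; rewrite !inE => /orP[zX'|zY'].
- apply/orP; left; rewrite eX; apply/nbP => a aY. rewrite sym; apply: c' zX' _; exact: (subsetP YY').
- apply/orP; right; rewrite eY; apply/nbP => a aX. exact: c' (subsetP XX' _ aX) zY'.
Qed.

Lemma closed_biclique (X Y : {set T}) : sides e X Y -> Y = nb X -> X = nb Y -> biclique e (X :|: Y).
Proof.
move=> sXY eY eX; split; first by exists X, Y.
move=> P' /properP [sub [z zP' znP]] [X' [Y' [eP' s']]].
have [X0 _ _ _ _] := sXY.
case/set0Pn: X0 => x0 x0X.
have x0P' : x0 \in P' by apply: (subsetP sub); rewrite inE x0X.
move: sub x0P' zP'; rewrite eP' inE => sub /orP[x0X'|x0Y'] zP'.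
- by move: (subsetP (cover_aux sXY eY eX s' x0X x0X' sub) _ zP'); rewrite (negbTE znP).
- have := cover_aux sXY eY eX (sidesC s') x0X x0Y'; rewrite [Y' :|: X']setUC => /(_ sub) /subsetP /(_ z zP').
  by rewrite (negbTE znP).
Qed.

Lemma rel_R (P XP YP : {set T}) v : P = XP :|: YP -> sides e XP YP -> YP = nb XP -> XP = nb YP -> v \in XP ->
  P = nb (nb [set v]) :|: nb [set v] \/
  (nb (nb [set v]) \proper XP /\ YP \proper nb [set v]).
Proof.
move=> eP [_ _ _ _ c] eY eX vX.
have YY : YP \subset nb [set v].
  apply/subsetP => y yY; apply/nbP => a; rewrite inE => /eqP->; exact: c.
have XX : nb (nb [set v]) \subset XP by rewrite eX nb_anti.
case: (eqVneq YP (nb [set v])) => [E|NE].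
- by left; rewrite eP eX E.
- right; split; last by rewrite properEneq NE.
  rewrite properEneq XX andbT; apply/eqP => E; move/eqP: NE; apply.
  apply/eqP; rewrite eqEsubset YY /=.
  by rewrite -nb3 E -eY.
Qed.


Lemma main P Q : biclique e P -> biclique e Q -> KB_adj P Q -> KBm_sq_adj e P Q.
Proof.
move=> bP bQ [nPQ /set0Pn [v]]; rewrite inE => /andP [vP vQ].
have [XP [YP [eP sP vXP eYP eXP]]] := biclique_pick bP vP.
have [XQ [YQ [eQ sQ vXQ eYQ eXQ]]] := biclique_pick bQ vQ.
set Y := nb [set v]; set X := nb Y.
have [_ YP0 _ _ cP] := sP.
have [y0 y0YP] := set0Pn _ YP0.
have y0Y : y0 \in Y by apply/nbP => a; rewrite inE => /eqP->; exact: cP.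
have vX : v \in X.
  apply/nbP => a /nbP H; rewrite sym; apply: H; by rewrite inE.
have eYX : Y = nb X by rewrite /X /Y nb3.
have sR : sides e X Y.
  split.
  - by apply/set0Pn; exists v.
  - by apply/set0Pn; exists y0.
  - move=> x x' /nbP hx /nbP hx'; apply/negP => exx'.
    by apply: (@k3 y0 x x'); split => //; [exact: hx | exact: hx'].
  - move=> y y' /nbP hy /nbP hy'; apply/negP => eyy'.
    by apply: (@k3 v y y'); split => //; [apply: hy | apply: hy']; rewrite inE.
  - move=> x y /nbP hx yY; rewrite sym; exact: hx.
have bR := closed_biclique sR eYX (erefl X).
have hP := rel_R eP sP eYP eXP vXP.
have hQ := rel_R eQ sQ eYQ eXQ vXQ.
split => //.
case: (eqVneq P (X :|: Y)) => [EP|NP].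
- left; case: hQ => [EQ|[h1 h2]]; first by rewrite EP -EQ eqxx in nPQ.
  split => //; exists Y, X, YQ, XQ; split => //.
  + by rewrite EP setUC.
  + exact: sidesC.
  + by rewrite eQ setUC.
  + exact: sidesC.
- case: hP => [EP|[p1 p2]]; first by rewrite EP eqxx in NP.
  case: (eqVneq Q (X :|: Y)) => [EQ|NQ].
  + left; split => //; exists XP, YP, X, Y; split => //.
  + right; exists (X :|: Y); split => //; split => //.
    * by exists XP, YP, X, Y; split.
    * by rewrite eq_sym.
    * exists Y, X, YQ, XQ; split => //.
      -- by rewrite setUC.
      -- exact: sidesC.
      -- by rewrite eQ setUC.
      -- exact: sidesC.
      -- case: hQ => [EQ'|[h1 h2]]; first by rewrite EQ' eqxx in NQ.
         by split.
Qed.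

Lemma back P Q : KBm_sq_adj e P Q -> KB_adj P Q.
Proof.
case=> nPQ H; split => //.
case: H => [[_ [A [B [C [D [eP [_ _ _ _ _] eQ [C0 _ _ _ _] [CA BD]]]]]]] | [R [_ [_ mPR] [_ mRQ]]]].
2: move: mPR mRQ => [A [B [C [D [eP [_ _ _ _ _] eR [C0 _ _ _ cCD] [CA BD]]]]]]
     [C' [D' [E [F [eR' [_ _ iC' _ _] eQ [E0 _ _ _ _] [EC' DF]]]]]].
- case/set0Pn: C0 => x xC; apply/set0Pn; exists x.
  by rewrite inE eP eQ !inE xC (subsetP (proper_sub CA) _ xC).
- case/set0Pn: E0 => x0 x0E.
  have x0C' : x0 \in C' := subsetP (proper_sub EC') _ x0E.
  have : x0 \in R by rewrite eR' inE x0C'.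
  rewrite eR inE => /orP [x0C|x0D].
  + apply/set0Pn; exists x0.
    by rewrite inE eP eQ !inE x0E (subsetP (proper_sub CA) _ x0C).
  + case/set0Pn: C0 => c cC.
    have : c \in R by rewrite eR inE cC.
    rewrite eR' inE => /orP [cC'|cD'].
    * by move: (iC' _ _ cC' x0C'); rewrite (cCD _ _ cC x0D).
    * apply/set0Pn; exists c.
      by rewrite inE eP eQ !inE (subsetP (proper_sub CA) _ cC) (subsetP (proper_sub DF) _ cD') orbT.
Qed.

End S.

Theorem theorem1 (T : finType) (e : rel T) :
  simple_graph e -> K3_free e ->
  forall P Q : {set T}, biclique e P -> biclique e Q ->
    (KB_adj P Q <-> KBm_sq_adj e P Q).
Proof.
move=> [sym irr] k3 P Q bP bQ; split; [exact: main | exact: back].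
Qed.
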